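(* Let $d$ be an integer and let $G$ be a finite connected $d$-regular simple graph containing no cycle of length $3$ and no cycle of length $5$ as a subgraph. If $uv$ is an edge of $G$ with $\kappa_{LLY}(u,v)>0$, then there is a perfect matching between $N(u)\setminus\{v\}$ and $N(v)\setminus\{u\}$ using edges of $G$.
   Context: For vertices $u,v$ of a connected graph $G$, $d(u,v)$ is the graph distance, $N(v)$ is the neighborhood of $v$, $d_v=|N(v)|$. For $0\le\alpha<1$, the $\alpha$-lazy random walk is $m_x^\alpha(x)=\alpha$, $m_x^\alpha(v)=(1-\alpha)/d_x$ for $v\in N(x)$, $m_x^\alpha(v)=0$ otherwise. The transportation distance between probability distributions $m_1,m_2$ on $V(G)$ is $W(m_1,m_2)=\inf_A\sum_{x,y}A(x,y)d(x,y)$ over couplings $A:V\times V\to[0,1]$ with $\sum_yA(x,y)=m_1(x)$, $\sum_xA(x,y)=m_2(y)$. For distinct $x,y$, $\kappa_\alpha(x,y)=1-W(m_x^\alpha,m_y^\alpha)/d(x,y)$ and $\kappa_{LLY}(x,y)=\lim_{\alpha\to1}\kappa_\alpha(x,y)/(1-\alpha)$. *)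

(* Defs.v *)
From HB Require Import structures.
From mathcomp Require Import all_boot all_order all_algebra.
From mathcomp Require Import all_classical all_reals all_analysis.
Set Implicit Arguments. Unset Strict Implicit. Unset Printing Implicit Defensive.
Import Order.TTheory GRing.Theory Num.Theory numFieldNormedType.Exports.
Local Open Scope classical_set_scope.
Local Open Scope ring_scope.

Section Graphs.
Variable T : finType.
Variable e : rel T.

Definition simple_graph : Prop := symmetric e /\ irreflexive e.
Definition connected_graph : Prop := forall x y : T, connect e x y.
Definition nbhd (x : T) : {set T} := [set y | e x y].
Definition regular (d : nat) : Prop := forall x : T, #|nbhd x| = d.

Definition no_C3 : Prop :=
  forall a b c : T, uniq [:: a; b; c] -> ~ [&& e a b, e b c & e c a].
Definition no_C5 : Prop :=
  forall a b c d f : T, uniq [:: a; b; c; d; f] ->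
    ~ [&& e a b, e b c, e c d, e d f & e f a].

Definition walkn (n : nat) (x y : T) : bool :=
  [exists p : n.-tuple T, path e x p && (last x p == y)].

(* graph distance: least n with a walk of length n from x to y
   (for a connected graph this is < #|T|; default #|T| otherwise) *)
Definition gdist (x y : T) : nat := find (fun n => walkn n x y) (iota 0 #|T|).

Definition couplings (R : realType) (m1 m2 : T -> R) : set (T -> T -> R) :=
  [set A | (forall x y, 0 <= A x y <= 1) /\
           (forall x, \sum_(y : T) A x y = m1 x) /\
           (forall y, \sum_(x : T) A x y = m2 y)].

Definition Wdist (R : realType) (m1 m2 : T -> R) : R :=
  inf [set c : R | exists2 A, couplings m1 m2 A &
         c = \sum_(x : T) \sum_(y : T) A x y * (gdist x y)%:R].

Definition lazy_walk (R : realType) (alpha : R) (x : T) : T -> R :=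
  fun v => if v == x then alpha
           else if e x v then (1 - alpha) / (#|nbhd x|)%:R else 0.

Definition kappa_alpha (R : realType) (alpha : R) (x y : T) : R :=
  1 - Wdist (lazy_walk alpha x) (lazy_walk alpha y) / (gdist x y)%:R.

Definition kappa_LLY (R : realType) (x y : T) : R :=
  let f : R -> R := fun alpha => kappa_alpha alpha x y / (1 - alpha) in
  lim (f @ at_left (1 : R)).

Definition perfect_matching_between (A B : {set T}) : Prop :=
  exists f : T -> T,
    [/\ {in A, forall a, f a \in B /\ e a (f a)},
        {in A &, injective f} &
        {in B, forall b, exists2 a, a \in A & f a = b}].

End Graphs.

(* Main.v *)
Require Import Defs.
From HB Require Import structures.
From mathcomp Require Import all_boot all_order all_algebra.
From mathcomp Require Import all_classical all_reals all_analysis.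
From mathcomp Require Import zify ring lra.
Import Order.TTheory GRing.Theory Num.Theory numFieldNormedType.Exports.
Local Open Scope ring_scope.


Local Open Scope nat_scope.
Definition NB {T : finType} (e : rel T) (B S : {set T}) := [set b in B | [exists a in S, e a b]].

Lemma NB_sub {T : finType} (e : rel T) (B S : {set T}) : NB e B S \subset B.
Proof. by apply/fintype.subsetP=> b; rewrite inE => /andP[]. Qed.

Lemma hall_aux {T : finType} (e : rel T) n (A B : {set T}) : #|A| <= n ->
  (forall S : {set T}, S \subset A -> #|S| <= #|NB e B S|) ->
  exists f : T -> T, {in A, forall a, f a \in B /\ e a (f a)} /\ {in A &, injective f}.
Proof.
elim: n A B => [|n IH] A B hA hH.
  have A0 : A = finset.set0 by apply/cards0_eq; lia.
  by exists id; split => [a|a b]; rewrite A0 inE.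
case: (boolP [exists S : {set T}, [&& S \subset A, S != finset.set0, S != A & #|NB e B S| <= #|S|]]).
- case/existsP => S /and4P [SA S0 SnA hS].
  have SpA : S \proper A by rewrite finset.properEneq SnA.
  have cS : #|S| < #|A| by apply: proper_card.
  set B1 := NB e B S.
  have [f1 [f1B f1i]] : exists f : T -> T, {in S, forall a, f a \in B1 /\ e a (f a)} /\ {in S &, injective f}.
    apply: IH; first by lia.
    move=> S' S'S.
    suff -> : NB e B1 S' = NB e B S' by apply: hH; apply: fintype.subset_trans SA.
    apply/setP => b; rewrite !inE; apply/idP/idP.
      by case/andP => /andP[-> _] ->.
    case/andP => -> /existsP[a /andP[aS' eab]] /=.
    apply/andP; split; apply/existsP; exists a; rewrite eab andbT //.
    exact: (fintype.subsetP S'S).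
  set A2 := A :\: S. set B2 := B :\: B1.
  have [f2 [f2B f2i]] : exists f : T -> T, {in A2, forall a, f a \in B2 /\ e a (f a)} /\ {in A2 &, injective f}.
    apply: IH.
      have := cardsID S A. rewrite (finset.setIidPr (proper_sub SpA)) -/A2.
      have : 0 < #|S| by rewrite card_gt0.
      lia.
    move=> S' S'A2.
    have S'A : S' \subset A by apply: fintype.subset_trans S'A2 (finset.subsetDl _ _).
    have dj : [disjoint S' & S].
      rewrite -setI_eq0; apply/eqP/setP => x; rewrite !inE.
      case xS': (x \in S') => //=.
      by have := fintype.subsetP S'A2 x xS'; rewrite inE => /andP[/negbTE ->].
    have h1' : #|S' :|: S| <= #|NB e B (S' :|: S)|.
      by apply: hH; rewrite finset.subUset S'A (proper_sub SpA).
    have h2 : NB e B (S' :|: S) \subset NB e B2 S' :|: B1.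
      apply/fintype.subsetP => b; rewrite !inE => /andP[bB /existsP[a /andP[]]].
      rewrite bB /= andbT inE => /orP[aS' eab|aS eab].
        case E: [exists a0 in S, e a0 b]; first by rewrite orbT.
        by rewrite orbF /=; apply/existsP; exists a; rewrite aS' eab.
      by apply/orP; right; apply/existsP; exists a; rewrite aS eab.
    have := subset_leq_card h2.
    have := cardsUI (NB e B2 S') B1.
    have := cardsUI S' S.
    rewrite -setI_eq0 in dj; rewrite (eqP dj) cards0.
    have hS1 : #|B1| <= #|S| by []. lia.
  exists (fun x => if x \in S then f1 x else f2 x); split.
    move=> a aA; case: ifP => aS.
      have [h1 h2] := f1B a aS; split => //.
      exact: (fintype.subsetP (NB_sub e B S)).
    have aA2 : a \in A2 by rewrite inE aS aA.
    have [h1 h2] := f2B a aA2; split => //.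
    by move: h1; rewrite inE => /andP[].
  move=> x y xA yA /=.
  case: ifP => xS; case: ifP => yS.
  - exact: f1i.
  - have yA2 : y \in A2 by rewrite inE yS yA.
    move=> E; have := (f2B y yA2).1; rewrite inE -E.
    by have [-> _] := f1B x xS.
  - have xA2 : x \in A2 by rewrite inE xS xA.
    move=> E; have := (f2B x xA2).1; rewrite inE E.
    by have [-> _] := f1B y yS.
  - apply: f2i; by rewrite inE ?xS ?yS.
- rewrite negb_exists => /forallP nt.
  case: (set_0Vmem A) => [A0|[a aA]].
    by exists id; split => [x|x y]; rewrite A0 inE.
  have [b /andP[bB eab]] : exists b, (b \in B) && e a b.
    have := hH [set a]; rewrite finset.sub1set aA cards1 => /(_ isT).
    rewrite card_gt0 => /set0Pn[b]; rewrite inE => /andP[bB /existsP[a' /andP[]]].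
    by rewrite inE => /eqP -> eab; exists b; rewrite bB.
  have [f' [f'B f'i]] : exists f : T -> T, {in A :\ a, forall x, f x \in B :\ b /\ e x (f x)} /\ {in A :\ a &, injective f}.
    apply: IH.
      by have := cardsD1 a A; rewrite aA; lia.
    move=> S' S'A.
    case: (set_0Vmem S') => [->|[s sS']]; first by rewrite cards0.
    have := nt S'; rewrite negb_and.
    have -> : S' \subset A by apply: fintype.subset_trans S'A (finset.subsetDl _ _).
    have -> /= : S' != finset.set0 by apply/set0Pn; exists s.
    have -> /= : S' != A.
      apply/eqP => E; have := fintype.subsetP S'A a; rewrite E aA => /(_ isT).
      by rewrite !inE eqxx.
    rewrite -ltnNge => hlt.
    have h2 : NB e B S' :\ b \subset NB e (B :\ b) S'.
      apply/fintype.subsetP => y; rewrite !inE => /andP[ynb /andP[yB ->]].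
      by rewrite ynb yB.
    have := subset_leq_card h2.
    have := cardsD1 b (NB e B S').
    case: (b \in NB e B S'); lia.
  exists (fun x => if x == a then b else f' x); split.
    move=> x xA; case: eqP => [->|xa]; first by [].
    have xA' : x \in A :\ a by rewrite !inE xA andbT; apply/eqP.
    have [h1 h2] := f'B x xA'; split => //.
    by move: h1; rewrite !inE => /andP[].
  move=> x y xA yA /=.
  case: eqP => xa; case: eqP => ya.
  - by rewrite xa ya.
  - have yA' : y \in A :\ a by rewrite !inE yA andbT; apply/eqP.
    move=> E; have := (f'B y yA').1; by rewrite -E !inE eqxx.
  - have xA' : x \in A :\ a by rewrite !inE xA andbT; apply/eqP.
    move=> E; have := (f'B x xA').1; by rewrite E !inE eqxx.
  - apply: f'i; rewrite !inE ?xA ?yA andbT; by apply/eqP.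
Qed.
Local Open Scope ring_scope.

Lemma lim_nonpos (R : realType) (f : R -> R) :
  (\forall a \near at_left (1:R), f a <= 0) -> lim (f @ at_left (1:R))%classic <= 0.
Proof.
move=> H.
have [c|nc] := pselect (cvg (f @ at_left (1:R))%classic).
  exact: limr_le.
rewrite /lim /lim_in getPN //.
move=> l Hl; apply: nc.
by apply/cvg_ex; exists l.
Qed.


Lemma walkn0 (T : finType) (e : rel T) x y : walkn e 0 x y -> x = y.
Proof.
move/existsP=> [t]; case: t => s hs /=.
by case: s hs => [|z s] //= _ /eqP.
Qed.

Lemma walkn1 (T : finType) (e : rel T) x y : walkn e 1 x y -> e x y.
Proof.
move/existsP=> [t]; case: t => s hs /=.
by case: s hs => [|z [|w s]] //= _ /andP[/andP[exz _] /eqP <-].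
Qed.

Lemma walkn2 (T : finType) (e : rel T) x y : walkn e 2 x y -> exists w, e x w /\ e w y.
Proof.
move/existsP=> [t]; case: t => s hs /=.
case: s hs => [|z [|w [|r s]]] //= _ /andP[/and3P[exz ezw _] /eqP <-].
by exists z.
Qed.

Lemma walkn_1 (T : finType) (e : rel T) x y : e x y -> walkn e 1 x y.
Proof. by move=> exy; apply/existsP; exists [tuple y]; rewrite /= exy eqxx. Qed.

Lemma gdist_cases (T : finType) (e : rel T) x y :
  gdist e x y = #|T|%N \/ walkn e (gdist e x y) x y.
Proof.
rewrite /gdist; set P := fun n => walkn e n x y.
case: (ltnP (find P (iota 0 #|T|)) #|T|) => h.
  right.
  have hh : has P (iota 0 #|T|) by rewrite has_find size_iota.
  have := nth_find 0%N hh; rewrite nth_iota //.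
left; apply/eqP; rewrite eqn_leq h andbT.
by have := find_size P (iota 0 #|T|); rewrite size_iota.
Qed.

Lemma gdist_edge (T : finType) (e : rel T) x y : (2 <= #|T|)%N -> x != y -> e x y ->
  gdist e x y = 1%N.
Proof.
move=> hN xy exy.
have h0 : walkn e 0 x y = false.
  by case h: (walkn e 0 x y) => //; move: (@walkn0 _ _ _ _ h) => E; rewrite E eqxx in xy.
have h1 := @walkn_1 _ _ _ _ exy.
rewrite /gdist; move: hN h0 h1.
case: (#|T|)%N => [|[|n]] //= _.
by move=> -> ->.
Qed.

Lemma lazy_sum (R : realType) (T : finType) (e : rel T) (a : R) x0 (h : T -> R) :
  irreflexive e ->
  \sum_x h x * lazy_walk e a x0 x =
  h x0 * a + (\sum_(x in nbhd e x0) h x) * ((1 - a) / (#|nbhd e x0|)%:R).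
Proof.
move=> irr.
rewrite (bigD1 x0) //= /lazy_walk eqxx; congr (_ + _).
rewrite mulr_suml (bigID (fun x => e x0 x)) /=.
rewrite [X in _ + X]big1 ?addr0 => [|x /andP[/negbTE -> /negbTE ->]]; last by rewrite mulr0.
apply: eq_big => [x|x /andP[/negbTE -> ->]] //.
rewrite inE; case: eqP => [->|]; by rewrite ?irr ?andbT.
Qed.

Lemma lazy_total (R : realType) (T : finType) (e : rel T) (a : R) x0 :
  irreflexive e -> (0 < #|nbhd e x0|)%N ->
  \sum_x lazy_walk e a x0 x = 1.
Proof.
move=> irr hd.
have := @lazy_sum R T e a x0 (fun _ => 1) irr.
under eq_bigr do rewrite mul1r.
move=> ->.
rewrite sumr_const mul1r.
have hd' : (#|nbhd e x0|%:R : R) != 0 by rewrite pnatr_eq0 -lt0n.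
rewrite mulrCA mulfV // mulr1.
by rewrite addrC subrK.
Qed.

Lemma lazy_bounds (R : realType) (T : finType) (e : rel T) (a : R) x0 x :
  0 <= a <= 1 -> 0 <= lazy_walk e a x0 x <= 1.
Proof.
move=> /andP[a0 a1]; rewrite /lazy_walk.
case: eqP => _; first by rewrite a0 a1.
case: (e x0 x); last by rewrite lexx ler01.
case: (posnP #|nbhd e x0|) => [->|hp]; first by rewrite invr0 mulr0 lexx ler01.
apply/andP; split.
  by apply: divr_ge0; [rewrite subr_ge0|rewrite ler0n].
rewrite ler_pdivrMr ?ltr0n // mul1r.
apply: (le_trans (_ : _ <= 1)); first by rewrite lerBlDr lerDl.
by rewrite ler1n.
Qed.

Lemma coupling_prod (R : realType) (T : finType) (m1 m2 : T -> R) :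
  (forall x, 0 <= m1 x <= 1) -> (forall x, 0 <= m2 x <= 1) ->
  \sum_x m1 x = 1 -> \sum_x m2 x = 1 ->
  couplings m1 m2 (fun x y => m1 x * m2 y).
Proof.
move=> b1 b2 s1 s2; split; [|split].
- move=> x y; have /andP[h1 h2] := b1 x; have /andP[h3 h4] := b2 y.
  apply/andP; split; first exact: mulr_ge0.
  by rewrite -(mulr1 1); apply: ler_pM.
- by move=> x; rewrite -mulr_sumr s2 mulr1.
- by move=> y; rewrite -mulr_suml s1 mul1r.
Qed.

Lemma cost_lb (R : realType) (T : finType) (e : rel T) (m1 m2 : T -> R) C (g : T -> nat)
  (P1 P2 : pred T) :
  couplings m1 m2 C ->
  (forall x, ~~ P1 x -> m1 x = 0) -> (forall y, ~~ P2 y -> m2 y = 0) ->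
  (forall x y, P1 x -> P2 y -> (g x <= g y + gdist e x y)%N) ->
  \sum_x (g x)%:R * m1 x - \sum_y (g y)%:R * m2 y <=
  \sum_x \sum_y C x y * (gdist e x y)%:R.
Proof.
move=> [hb [hm1 hm2]] z1 z2 lip.
have -> : \sum_x (g x)%:R * m1 x - \sum_y (g y)%:R * m2 y =
          \sum_x \sum_y C x y * ((g x)%:R - (g y)%:R).
  rewrite (eq_bigr (fun x => \sum_y C x y * (g x)%:R)); last first.
    by move=> x _; rewrite -hm1 mulr_sumr; apply: eq_bigr => y _; rewrite mulrC.
  rewrite [X in _ - X](eq_bigr (fun y => \sum_x C x y * (g y)%:R)); last first.
    by move=> y _; rewrite -hm2 mulr_sumr; apply: eq_bigr => x _; rewrite mulrC.
  rewrite [X in _ - X]exchange_big -sumrB; apply: eq_bigr => x _.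
  by rewrite -sumrB; apply: eq_bigr => y _; rewrite mulrBr.
apply: ler_sum => x _; apply: ler_sum => y _.
have [Cge0 _] := andP (hb x y).
case: (boolP (P1 x)) => p1; last first.
  have : C x y = 0.
    have := hm1 x; rewrite z1 // => /eqP; rewrite psumr_eq0 => [/allP /(_ y)|].
      by rewrite mem_index_enum => /(_ isT) /implyP /(_ isT) /eqP.
    by move=> i _; have /andP[] := hb x i.
  by move=> ->; rewrite !mul0r.
case: (boolP (P2 y)) => p2; last first.
  have : C x y = 0.
    have := hm2 y; rewrite z2 // => /eqP; rewrite psumr_eq0 => [/allP /(_ x)|].
      by rewrite mem_index_enum => /(_ isT) /implyP /(_ isT) /eqP.
    by move=> i _; have /andP[] := hb i y.
  by move=> ->; rewrite !mul0r.
apply: ler_wpM2l => //.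
rewrite lerBlDr -natrD ler_nat addnC.
exact: lip.
Qed.

Lemma tri (T : finType) (e : rel T) x y z : simple_graph e -> no_C3 e ->
  e x y -> e y z -> e z x -> False.
Proof.
move=> [sym irr] c3 exy eyz ezx.
apply: (c3 x y z); last by rewrite exy eyz ezx.
rewrite /= !inE !negb_or; apply/and3P; split; last by [].
- apply/andP; split; apply/eqP => E; subst.
    by rewrite irr in exy.
  by rewrite irr in ezx.
- by apply/eqP => E; subst; rewrite irr in eyz.
Qed.

Lemma lip_main (T : finType) (e : rel T) (u v : T) (S : {set T}) (g : T -> nat) :
  simple_graph e -> no_C3 e -> no_C5 e -> e u v -> (3 <= #|T|)%N ->
  S \subset nbhd e u :\ v ->
  g = (fun x => if x == u then 2 else if x \in S then 3 else
         if x \in NB e (nbhd e v :\ u) S then 2 else if x \in nbhd e v :\ u then 0 else 1)%N ->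
  forall x y, (x == u) || e u x -> (y == v) || e v y -> (g x <= g y + gdist e x y)%N.
Proof.
move=> [sym irr] c3 c5 euv hT SA gE x y p1 p2.
have sg : simple_graph e by [].
have tr := fun x y z => @tri T e x y z sg c3.
have uv : u != v by apply/eqP => E; subst; rewrite irr in euv.
have SA' : forall z, z \in S -> e u z /\ z != v.
  by move=> z /(fintype.subsetP SA); rewrite !inE => /andP[-> ->].
have g3 : forall z, (g z <= 3)%N by move=> z; rewrite gE; repeat case: ifP.
have c1 : (x = u /\ g x = 2%N) \/ (g x <= 1)%N \/ (x \in S /\ g x = 3%N).
  rewrite gE; case: (x =P u) => [-> | xu]; first by left.
  case: ifP => xS; first by right; right.
  right; left; case: ifP => xT; last by case: ifP.
  exfalso; move: p1 xT; rewrite !inE => /orP[/eqP //|eux] /andP[/andP[xu' evx] _].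
  by apply: (tr u x v) => //; rewrite sym.
have c2 : (y = v /\ g y = 1%N) \/ (2 <= g y)%N \/ (y \in nbhd e v :\ u /\ y \notin NB e (nbhd e v :\ u) S).
  rewrite gE; case: (y =P u) => [-> | yu]; first by right; left.
  case: ifP => yS.
    exfalso; have [euy yv] := SA' y yS; move: p2 => /orP[/eqP E|evy].
      by rewrite E eqxx in yv.
    by apply: (tr u y v) => //; rewrite sym.
  case: ifP => yT; first by right; left.
  case: ifP => yB; first by right; right; split => //; rewrite yT.
  move: p2 yB => /orP[/eqP -> _|evy]; first by left.
  by rewrite !inE evy andbT => /negbT; rewrite negbK => /eqP.
case: (gdist_cases T e x y) => [->|]; first by have := g3 x; lia.
move: (gdist e x y) => n.
case: n => [|[|[|n]]] w; last by have := g3 x; lia.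
- by rewrite (walkn0 T e x y w); lia.
- have exy := walkn1 T e x y w.
  case: c1 => [[xu gx]|[gx|[xS gx]]]; last 2 first.
  + lia.
  + case: c2 => [[yv gy]|[gy|[yB yT]]].
    * exfalso; have [eux _] := SA' x xS; subst; by apply: (tr u x v) => //; rewrite sym.
    * lia.
    * exfalso; move: yT; rewrite inE yB /=; apply/negP; rewrite negbK.
      by apply/existsP; exists x; rewrite xS exy.
  + case: c2 => [[yv gy]|[gy|[yB yT]]]; [clear -gx gy; lia|clear -gx gy; lia|].
    exfalso; subst; move: yB; rewrite !inE => /andP[_ evy].
    by apply: (tr u y v) => //; rewrite sym.
- have [z [exz ezy]] := walkn2 T e x y w.
  case: c1 => [[xu gx]|[gx|[xS gx]]]; [clear -gx; lia|clear -gx; lia|].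
  case: c2 => [[yv gy]|[gy|[yB yT]]]; [clear -gx gy; lia|clear -gx gy; lia|].
  exfalso.
  have [eux xv] := SA' x xS.
  move: yB; rewrite !inE => /andP[yu evy].
  apply: (c5 u x z y v); last by rewrite eux exz ezy (sym y v) evy (sym v u) euv.
  have ne : forall a b, e a b -> a != b by move=> a b eab; apply/eqP => E; subst; rewrite irr in eab.
  rewrite /= !inE !negb_or.
  have ux := ne _ _ eux.
  have uz : u != z.
    by apply/eqP => E; rewrite -E in ezy; apply: (tr u y v) => //; rewrite sym.
  have xy : x != y.
    by apply/eqP => E; rewrite E in eux; apply: (tr u y v) => //; rewrite sym.
  have zv : z != v.
    by apply/eqP => E; rewrite E in exz; apply: (tr u x v) => //; rewrite sym.
  rewrite ux uz (eq_sym u y) yu uv ne //= xy xv (ne z y) //= zv /=.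
  by rewrite eq_sym ne.
Qed.

Lemma W_ge1 (R : realType) (T : finType) (e : rel T) (d : nat) (u v : T) (S : {set T}) (a : R) :
  simple_graph e -> regular e d -> no_C3 e -> no_C5 e -> e u v ->
  S \subset nbhd e u :\ v -> (#|NB e (nbhd e v :\ u) S| < #|S|)%N ->
  0 <= a <= 1 ->
  1 <= Wdist e (lazy_walk e a u) (lazy_walk e a v).
Proof.
move=> sg reg c3 c5 euv SA hS ha.
have [sym irr] := sg.
set A := nbhd e u :\ v; set B := nbhd e v :\ u; set T' := NB e B S.
have uv : u != v by apply/eqP => E; rewrite E irr in euv.
have vA : v \in nbhd e u by rewrite inE.
have uB : u \in nbhd e v by rewrite inE sym.
have dpos : (0 < d)%N by rewrite -(reg u) card_gt0; apply/set0Pn; exists v.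
have cA : #|A| = (d - 1)%N.
  rewrite /A; have := cardsD1 v (nbhd e u); rewrite vA reg /=; lia.
have cB : #|B| = (d - 1)%N.
  rewrite /B; have := cardsD1 u (nbhd e v); rewrite uB reg /=; lia.
have [s0 s0S] : exists s0, s0 \in S.
  by apply/set0Pn; rewrite -card_gt0; lia.
have hT : (3 <= #|T|)%N.
  have [eus s0v] : e u s0 /\ s0 != v.
    by move: (fintype.subsetP SA s0 s0S); rewrite !inE => /andP[-> ->].
  have us0 : u != s0 by apply/eqP => E; rewrite E irr in eus.
  have un : uniq [:: u; v; s0] by rewrite /= !inE negb_or uv us0 eq_sym s0v.
  have := max_card (mem [:: u; v; s0]).
  by rewrite (card_uniqP un).
pose g := (fun x => if x == u then 2 else if x \in S then 3 else
         if x \in T' then 2 else if x \in B then 0 else 1)%N.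
have lip := @lip_main T e u v S g sg c3 c5 euv hT SA erefl.
set m1 := lazy_walk e a u; set m2 := lazy_walk e a v.
have hd : (0 < #|nbhd e u|)%N by rewrite reg.
have hd2 : (0 < #|nbhd e v|)%N by rewrite reg.
apply: lb_le_inf.
  exists (\sum_x \sum_y (m1 x * m2 y) * (gdist e x y)%:R).
  exists (fun x y => m1 x * m2 y) => //.
  apply: coupling_prod; try (by move=> x; apply: lazy_bounds); exact: lazy_total.
move=> c [C hC ->].
have z1 : forall x, ~~ ((x == u) || e u x) -> m1 x = 0.
  by move=> x; rewrite negb_or => /andP[/negbTE xu /negbTE eux]; rewrite /m1 /lazy_walk xu eux.
have z2 : forall x, ~~ ((x == v) || e v x) -> m2 x = 0.
  by move=> x; rewrite negb_or => /andP[/negbTE xu /negbTE eux]; rewrite /m2 /lazy_walk xu eux.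
apply: le_trans (@cost_lb R T e m1 m2 C g _ _ hC z1 z2 lip).
rewrite /m1 /m2 !lazy_sum // !reg.
rewrite -!natr_sum.
have gu : g u = 2%N by rewrite /g eqxx.
have AB : forall x, x \in A -> x \in B -> False.
  move=> x; rewrite !inE => /andP[_ eux] /andP[_ evx].
  by apply: (@tri T e u x v) => //; rewrite sym.
have T'B : T' \subset B by apply: NB_sub.
have gv : g v = 1%N.
  rewrite /g (negbTE (_ : v != u)); last by rewrite eq_sym.
  have vS : v \notin S.
    by apply/negP => /(fintype.subsetP SA); rewrite !inE eqxx.
  have vB : v \notin B by rewrite !inE irr andbF.
  rewrite (negbTE vS) (negbTE vB).
  by rewrite ifF //; apply/negP => /(fintype.subsetP T'B); rewrite (negbTE vB).
have sumA : (\sum_(x in A) g x = 3 * #|S| + (#|A| - #|S|))%N.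
  rewrite (big_setID S) /= (finset.setIidPr SA).
  rewrite (eq_bigr (fun _ => 3%N)); last first.
    move=> x xS; rewrite /g xS ifF //; apply/negP => /eqP E.
    by move: (fintype.subsetP SA x xS); rewrite E !inE irr andbF.
  rewrite [X in (_ + X)%N](eq_bigr (fun _ => 1%N)); last first.
    move=> x; rewrite !inE => /andP[xS /andP[xv eux]].
    have xA : x \in A by rewrite !inE xv eux.
    have xu : x != u by apply/eqP => E; rewrite E irr in eux.
    rewrite /g (negbTE xu) (negbTE xS).
    have xB : x \notin B by apply/negP => xB; apply: (AB x).
    by rewrite (negbTE xB) ifF //; apply/negP => /(fintype.subsetP T'B); rewrite (negbTE xB).
  rewrite /= !sum_nat_const cardsD (finset.setIidPr SA); lia.
have sumB : (\sum_(x in B) g x = 2 * #|T'|)%N.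
  rewrite (big_setID T') /= (finset.setIidPr T'B).
  rewrite (eq_bigr (fun _ => 2%N)); last first.
    move=> x xT; have xB := fintype.subsetP T'B x xT.
    have xu : x != u by move: xB; rewrite !inE => /andP[].
    have xS : x \notin S by apply/negP => /(fintype.subsetP SA) xA; apply: (AB x).
    by rewrite /g (negbTE xu) (negbTE xS) xT.
  rewrite [X in (_ + X)%N](eq_bigr (fun _ => 0%N)); last first.
    move=> x; rewrite inE => /andP[xT xB].
    have xu : x != u by move: xB; rewrite !inE => /andP[].
    have xS : x \notin S by apply/negP => /(fintype.subsetP SA) xA; apply: (AB x).
    by rewrite /g (negbTE xu) (negbTE xS) (negbTE xT) xB.
  rewrite !sum_nat_const; lia.
have hN : (\sum_(x in nbhd e v) g x + d <= \sum_(x in nbhd e u) g x)%N.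
  rewrite (big_setD1 v vA) (big_setD1 u uB) /= -/A -/B sumA sumB gu gv cA.
  have : (#|S| <= #|A|)%N by apply: subset_leq_card.
  have hS' : (#|T'| < #|S|)%N by []. rewrite cA; lia.
move: hN; rewrite gu gv.
set N1 := (\sum_(x in nbhd e u) g x)%N; set N2 := (\sum_(x in nbhd e v) g x)%N.
rewrite -(ler_nat R) natrD => hN.
have dR : (d%:R : R) != 0 by rewrite pnatr_eq0 -lt0n.
set b := (1 - a) / d%:R.
have hb : 0 <= b by apply: divr_ge0; [rewrite subr_ge0; case/andP: ha|rewrite ler0n].
have hdb : d%:R * b = 1 - a by rewrite /b mulrCA mulfV // mulr1.
have hpos : 0 <= N1%:R - N2%:R - d%:R :> R by lra.
have h2 := mulr_ge0 hpos hb.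
rewrite !mulrBl hdb in h2.
lra.
Qed.


Theorem lemma2p3 (R : realType) (T : finType) (e : rel T) (d : nat) (u v : T) :
  simple_graph e -> connected_graph e -> regular e d ->
  no_C3 e -> no_C5 e ->
  e u v -> 0 < kappa_LLY e R u v ->
  perfect_matching_between e (nbhd e u :\ v) (nbhd e v :\ u).
Proof.
move=> sg conn reg c3 c5 euv hk.
have [sym irr] := sg.
have uv : u != v by apply/eqP => E; rewrite E irr in euv.
have vA : v \in nbhd e u by rewrite inE.
have uB : u \in nbhd e v by rewrite inE sym.
set A := nbhd e u :\ v; set B := nbhd e v :\ u.
case: (boolP [exists S : {set T}, (S \subset A) && (#|NB e B S| < #|S|)%N]) =>
  [/existsP[S /andP[SA hS]]|H].
- exfalso.
  suff : kappa_LLY e R u v <= 0 by rewrite leNgt hk.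
  rewrite /kappa_LLY; apply: lim_nonpos.
  have hT : (2 <= #|T|)%N.
    have un : uniq [:: u; v] by rewrite /= inE uv.
    have := max_card (mem [:: u; v]).
    by rewrite (card_uniqP un).
  have g1 : gdist e u v = 1%N by apply: gdist_edge.
  near=> a.
  have a0 : 0 <= a by near: a; exact: nbhs_left_ge ltr01.
  have a1 : a < 1 by near: a; exact: nbhs_left_lt.
  have W := @W_ge1 R T e d u v S a sg reg c3 c5 euv SA hS.
  rewrite /kappa_alpha g1 divr1.
  apply: mulr_le0_ge0.
    rewrite subr_le0; apply: W; rewrite a0; exact: ltW.
  by rewrite invr_ge0 subr_ge0 ltW.
- have hH : forall S : {set T}, S \subset A -> (#|S| <= #|NB e B S|)%N.
    move=> S SA; move: H; rewrite negb_exists => /forallP /(_ S).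
    by rewrite SA /= -leqNgt.
  have [f [fB fi]] := @hall_aux T e #|A| A B (leqnn _) hH.
  exists f; split => //.
  have dA : #|A| = #|B|.
    rewrite /A /B; have := cardsD1 v (nbhd e u); have := cardsD1 u (nbhd e v).
    rewrite vA uB !reg /=; lia.
  have sub : f @: A \subset B.
    by apply/fintype.subsetP => b /imsetP[a aA ->]; have [] := fB a aA.
  have eqB : f @: A = B.
    apply/eqP; rewrite eqEcard sub /= (card_in_imset fi) dA; exact: leqnn.
  move=> b bB; rewrite -eqB in bB; case/imsetP: bB => a aA ->.
  by exists a.
Unshelve. all: end_near.
Qed.
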